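(* For any partition $\lambda$ and any integer $m\ge1$, $\omega_{\lambda}(r^{m-1},\dots,r,1;r;a,b)=\delta_{\lambda0}$, i.e. it equals $1$ if $\lambda=0$ and $0$ otherwise.
   Context: Fix $|p|<1$; parameters generic; $n\ge\ell(\lambda)$ fixed. $E(x)=(x;p)_\infty(p/x;p)_\infty$. For integer $m\ge0$, $(a)_m=\prod_{k=0}^{m-1}E(aq^k)$, for $m<0$, $(a)_m=1/(aq^m)_{-m}$; for a partition $\lambda$ with $n$ parts $(a)_\lambda=\prod_{i=1}^n(at^{1-i})_{\lambda_i}$; several arguments denote products; integer subscripts denote the single-integer symbol. $q^\lambda t^{\delta(n)}=(q^{\lambda_1}t^{n-1},\dots,q^{\lambda_n})$; $\mu\subseteq\lambda$ means $\mu_i\le\lambda_i$ for all $i$. $W$ functions: for $n$-part partitions with $\lambda_1\ge\mu_1\ge\dots\ge\lambda_n\ge\mu_n$, $\lambda_{n+1}=\mu_{n+1}=0$, $H_{\lambda/\mu}(q,p,t,b)=\prod_{1\le i<j\le n}\Big\{\frac{(q^{\mu_i-\mu_{j-1}}t^{j-i})_{\mu_{j-1}-\lambda_j}(q^{\lambda_i+\lambda_j}t^{3-j-i}b)_{\mu_{j-1}-\lambda_j}}{(q^{\mu_i-\mu_{j-1}+1}t^{j-i-1})_{\mu_{j-1}-\lambda_j}(q^{\lambda_i+\lambda_j+1}t^{2-j-i}b)_{\mu_{j-1}-\lambda_j}}\frac{(q^{\lambda_i-\mu_{j-1}+1}t^{j-i-1})_{\mu_{j-1}-\lambda_j}}{(q^{\lambda_i-\mu_{j-1}}t^{j-i})_{\mu_{j-1}-\lambda_j}}\Big\}\prod_{1\le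 i<j-1\le n}\frac{(q^{\mu_i+\lambda_j+1}t^{1-j-i}b)_{\mu_{j-1}-\lambda_j}}{(q^{\mu_i+\lambda_j}t^{2-j-i}b)_{\mu_{j-1}-\lambda_j}}$; for $x\in\mathbb{C}$, $W_{\lambda/\mu}(x;q,p,t,a,b)=H_{\lambda/\mu}\frac{(x^{-1},ax)_\lambda(qbx/t,qb/(axt))_\mu}{(x^{-1},ax)_\mu(qbx,qb/(ax))_\lambda}\prod_{i=1}^n\frac{E(bt^{1-2i}q^{2\mu_i})}{E(bt^{1-2i})}\frac{(bt^{1-2i})_{\mu_i+\lambda_{i+1}}}{(bqt^{-2i})_{\mu_i+\lambda_{i+1}}}t^{i(\mu_i-\lambda_{i+1})}$ (zero if the interlacing fails); recursively $W_{\lambda/\mu}(y,z_1,\dots,z_\ell;q,p,t,a,b)=\sum_\nu W_{\lambda/\nu}(yt^{-\ell};q,p,t,at^{2\ell},bt^\ell)W_{\nu/\mu}(z_1,\dots,z_\ell;q,p,t,a,b)$ over $\nu$ with $\lambda_1\ge\nu_1\ge\dots\ge\lambda_n\ge\nu_n\ge0$; $W_\lambda=W_{\lambda/0}$. Jackson coefficients (suppressing $q,p,t$): for $x\in\mathbb{C}$, $\omega_{\lambda/\mu}(x;r;a,b)=\frac{(x^{-1},ax)_\lambda}{(qbx,qb/(ax))_\lambda}\frac{(qbr^{-1}x,qb/(axr))_\mu}{(x^{-1},ax)_\mu}\frac{(r,br^{-1}t^{1-n})_\mu}{(qbr^{-2},qt^{n-1})_\mu}\prod_{i=1}^n\frac{E(br^{-1}t^{2-2i}q^{2\mu_i})}{E(br^{-1}t^{2-2i})}(qt^{2i-2})^{\mu_i}\prod_{1\le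 i<j\le n}\frac{(qt^{j-i})_{\mu_i-\mu_j}(br^{-1}t^{3-i-j})_{\mu_i+\mu_j}}{(qt^{j-i-1})_{\mu_i-\mu_j}(br^{-1}t^{2-i-j})_{\mu_i+\mu_j}}\,W_\mu(q^\lambda t^{\delta(n)};q,p,t,bt^{2-2n},br^{-1}t^{1-n})$; for $k\ge2$, recursively $\omega_{\lambda/\tau}(x_1,\dots,x_k;r;a,b)=\sum_{\mu:\tau\subseteq\mu\subseteq\lambda}\omega_{\lambda/\mu}(r^{1-k}x_1;r;ar^{2(k-1)},br^{k-1})\,\omega_{\mu/\tau}(x_2,\dots,x_k;r;a,b)$; $\omega_\lambda=\omega_{\lambda/0}$. *)

(* Defs.v *)
From HB Require Import structures.
From mathcomp Require Import all_boot all_order all_algebra.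
From mathcomp Require Import complex.
From mathcomp Require Import all_classical all_reals all_analysis.
Set Implicit Arguments. Unset Strict Implicit. Unset Printing Implicit Defensive.
Import Order.TTheory GRing.Theory Num.Theory.
Import numFieldNormedType.Exports.
Local Open Scope ring_scope.
Local Open Scope complex_scope.

(* 1-based access: part l i = l_i, and l_i = 0 for i beyond the size of l
   (so for an n-part partition l_{n+1} = 0). *)
Definition part (l : seq nat) (i : nat) : nat := nth 0%N l i.-1.

Fixpoint boxes (k N : nat) : seq (seq nat) :=
  if k is k'.+1 then [seq x :: s | x <- iota 0 N.+1, s <- boxes k' N]
  else [:: [::]].

Definition subpart (n : nat) (mu lam : seq nat) : bool :=
  all (fun i => part mu i <= part lam i)%N (iota 1 n).

Definition interlace (n : nat) (lam mu : seq nat) : bool :=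
  all (fun i => (part mu i <= part lam i) && (part lam i.+1 <= part mu i))%N
      (iota 1 n).

Section Elliptic.
Variable R : realType.
Local Notation C := R[i].
Variables (p q t : C).
Variable n : nat.        (* number of parts *)

(* E(x) = (x;p)_oo (p/x;p)_oo : the limit of the partial products,
   taken componentwise (real and imaginary parts) in R. *)
Definition theta (x : C) : C :=
  let s := fun N : nat => \prod_(k < N) ((1 - x * p ^+ k) * (1 - p ^+ k.+1 / x)) in
  (limn (fun N => complex.Re (s N)))%:C + 'i * (limn (fun N => complex.Im (s N)))%:C.

Definition pochn (a : C) (m : nat) : C := \prod_(k < m) theta (a * q ^+ k).

Definition poch (a : C) (m : int) : C :=
  match m with
  | Posz k => pochn a k
  | Negz k => (pochn (a * q ^ (Negz k)) k.+1)^-1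
  end.

Definition pochP (a : C) (l : seq nat) : C :=
  \prod_(1 <= i < n.+1) poch (a * t ^ (1 - i%:Z)) (part l i)%:Z.

(* (a)_lambda / (a)_mu, written in cancelled form
   prod_{i=1}^n (a t^{1-i} q^{mu_i})_{lambda_i - mu_i}
   (equal to the quotient as a meromorphic function of a, since
   (c)_k (c q^k)_{m-k} = (c)_m for all integers k, m). *)
Definition pochR (a : C) (l mu : seq nat) : C :=
  \prod_(1 <= i < n.+1)
     poch (a * t ^ (1 - i%:Z) * q ^+ part mu i) ((part l i)%:Z - (part mu i)%:Z).

Definition Hfun (b : C) (l mu : seq nat) : C :=
  let L := fun i => (part l i)%:Z in
  let M := fun i => (part mu i)%:Z in
  (\prod_(1 <= i < n.+1) \prod_(i.+1 <= j < n.+1)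
     let e := M j.-1 - L j in
     (poch (q ^ (M i - M j.-1) * t ^ (j%:Z - i%:Z)) e
      * poch (q ^ (L i + L j) * t ^ (3 - j%:Z - i%:Z) * b) e)
     / (poch (q ^ (M i - M j.-1 + 1) * t ^ (j%:Z - i%:Z - 1)) e
        * poch (q ^ (L i + L j + 1) * t ^ (2 - j%:Z - i%:Z) * b) e)
     * (poch (q ^ (L i - M j.-1 + 1) * t ^ (j%:Z - i%:Z - 1)) e
        / poch (q ^ (L i - M j.-1) * t ^ (j%:Z - i%:Z)) e))
  * (\prod_(1 <= i < n.+1) \prod_(i.+2 <= j < n.+2)
     let e := M j.-1 - L j in
     poch (q ^ (M i + L j + 1) * t ^ (1 - j%:Z - i%:Z) * b) e
     / poch (q ^ (M i + L j) * t ^ (2 - j%:Z - i%:Z) * b) e).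

Definition W1 (x a b : C) (l mu : seq nat) : C :=
  if interlace n l mu then
    Hfun b l mu
    * pochR x^-1 l mu * pochR (a * x) l mu
    * pochP (q * b * x / t) mu * pochP (q * b / (a * x * t)) mu
    / (pochP (q * b * x) l * pochP (q * b / (a * x)) l)
    * \prod_(1 <= i < n.+1)
        (theta (b * t ^ (1 - 2 * i%:Z) * q ^+ (2 * part mu i))
           / theta (b * t ^ (1 - 2 * i%:Z))
         * poch (b * t ^ (1 - 2 * i%:Z)) (part mu i + part l i.+1)%N%:Z
         / poch (b * q * t ^ (- 2 * i%:Z)) (part mu i + part l i.+1)%N%:Z
         * t ^ (i%:Z * ((part mu i)%:Z - (part l i.+1)%:Z)))
  else 0.

Fixpoint Wm (xs : seq C) (a b : C) (l mu : seq nat) {struct xs} : C :=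
  match xs with
  | [::] => if l == mu then 1 else 0
  | [:: y] => W1 y a b l mu
  | y :: zs =>
      let k := size zs in
      \sum_(nu <- boxes n (part l 1) | interlace n l nu)
        W1 (y * t ^- k) (a * t ^+ (2 * k)) (b * t ^+ k) l nu * Wm zs a b nu mu
  end.

Definition omega1 (x r a b : C) (l mu : seq nat) : C :=
  pochR x^-1 l mu * pochR (a * x) l mu
  / (pochP (q * b * x) l * pochP (q * b / (a * x)) l)
  * (pochP (q * b / r * x) mu * pochP (q * b / (a * x * r)) mu)
  * (pochP r mu * pochP (b / r * t ^ (1 - n%:Z)) mu)
  / (pochP (q * b / r ^+ 2) mu * pochP (q * t ^ (n%:Z - 1)) mu)
  * \prod_(1 <= i < n.+1)
      (theta (b / r * t ^ (2 - 2 * i%:Z) * q ^+ (2 * part mu i))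
         / theta (b / r * t ^ (2 - 2 * i%:Z))
       * (q * t ^ (2 * i%:Z - 2)) ^+ part mu i)
  * \prod_(1 <= i < n.+1) \prod_(i.+1 <= j < n.+1)
      (poch (q * t ^ (j%:Z - i%:Z)) ((part mu i)%:Z - (part mu j)%:Z)
       / poch (q * t ^ (j%:Z - i%:Z - 1)) ((part mu i)%:Z - (part mu j)%:Z)
       * poch (b / r * t ^ (3 - i%:Z - j%:Z)) (part mu i + part mu j)%N%:Z
       / poch (b / r * t ^ (2 - i%:Z - j%:Z)) (part mu i + part mu j)%N%:Z)
  * Wm [seq q ^+ part l i * t ^+ (n - i) | i <- iota 1 n]
       (b * t ^ (2 - 2 * n%:Z)) (b / r * t ^ (1 - n%:Z)) mu (nseq n 0%N).

Fixpoint omega (xs : seq C) (r a b : C) (l tau : seq nat) {struct xs} : C :=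
  match xs with
  | [::] => if l == tau then 1 else 0
  | [:: x] => omega1 x r a b l tau
  | x :: zs =>
      let k1 := size zs in
      \sum_(mu <- boxes n (part l 1)
             | [&& sorted geq mu, subpart n tau mu & subpart n mu l])
        omega1 (x / r ^+ k1) r (a * r ^+ (2 * k1)) (b * r ^+ k1) l mu
        * omega zs r a b mu tau
  end.

End Elliptic.

(* Genericity of the parameters: q,t,a,b,r nonzero and no nontrivial
   monomial q^e1 t^e2 a^e3 b^e4 r^e5 lies in p^Z (so that E does not
   vanish at any nontrivial monomial in the parameters). *)
Definition generic_params (R : realType) (p q t a b r : R[i]) : Prop :=
  [/\ q != 0, t != 0, a != 0, b != 0 & r != 0] /\
  forall e1 e2 e3 e4 e5 k : int,
    q ^ e1 * t ^ e2 * a ^ e3 * b ^ e4 * r ^ e5 = p ^ k ->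
    [/\ e1 = 0, e2 = 0, e3 = 0, e4 = 0 & e5 = 0].

(* Main.v *)
Require Import Defs.
From HB Require Import structures.
From mathcomp Require Import all_boot all_order all_algebra.
From mathcomp Require Import complex.
From mathcomp Require Import all_classical all_reals all_analysis.
From mathcomp Require Import ring lra.
Import Order.TTheory GRing.Theory Num.Theory.
Import numFieldNormedType.Exports.
Import ComplexField.Normc.
Local Open Scope ring_scope.
Local Open Scope complex_scope.
Local Open Scope classical_set_scope.

Section NC.
Variable R : realType.
Local Notation C := R[i].
Lemma normc_ge0 (z : C) : 0 <= normc z.
Proof. by case: z => a b /=; apply: sqrtr_ge0. Qed.

Lemma exists_small {rho e : R} : 0 <= rho < 1 -> 0 < e -> exists K : nat, rho ^+ K < e.
Proof.
move=> /andP[r0 r1] e0.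
have H : (GRing.exp rho : R ^nat) x @[x --> \oo] --> 0 by apply: cvg_expr; rewrite ger0_norm.
have := @cvgr_lt R nat \oo _ _ 0 H e e0.
by case=> N _ HN; exists N; apply: (HN N (leqnn N)).
Qed.

Lemma normc_Re (z : C) : `|complex.Re z| <= normc z.
Proof.
case: z => a b /=; rewrite -sqrtr_sqr; apply: ler_wsqrtr.
by rewrite lerDl sqr_ge0.
Qed.

Lemma normc_Im (z : C) : `|complex.Im z| <= normc z.
Proof.
case: z => a b /=; rewrite -sqrtr_sqr; apply: ler_wsqrtr.
by rewrite lerDr sqr_ge0.
Qed.

Lemma normc_sqr (z : C) : normc z ^+ 2 = complex.Re z ^+ 2 + complex.Im z ^+ 2.
Proof. by case: z => a b /=; rewrite sqr_sqrtr // addr_ge0 // sqr_ge0. Qed.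

Lemma ReB (z w : C) : complex.Re (z - w) = complex.Re z - complex.Re w.
Proof. by case: z w => a b [c d]. Qed.

Lemma ImB (z w : C) : complex.Im (z - w) = complex.Im z - complex.Im w.
Proof. by case: z w => a b [c d]. Qed.

Lemma normcB_sym (z w : C) : normc (z - w) = normc (w - z).
Proof. by rewrite -normcN opprB. Qed.

Section Prod.
Variables (s g : nat -> C) (rho Cc : R).
Hypotheses (r0 : 0 <= rho) (r1 : rho < 1) (C0 : 0 <= Cc).
Hypotheses (sS : forall N, s N.+1 = s N * g N) (s0 : forall N, s N != 0).
Hypothesis (gb : forall k, normc (g k - 1) <= Cc * rho ^+ k).

Let D := Cc / (1 - rho).
Let D0 : 0 <= D.
Proof. by rewrite /D divr_ge0 // subr_ge0 ltW. Qed.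
Let DC : D * (1 - rho) = Cc.
Proof. by rewrite /D divfK // subr_eq0 eq_sym lt_eqF. Qed.

Let rhoX k : 0 <= rho ^+ k. Proof. exact: exprn_ge0. Qed.
Let rhoD k j : rho ^+ (k + j) <= rho ^+ k.
Proof.
rewrite exprD -{2}(mulr1 (rho ^+ k)) ler_wpM2l //.
by rewrite exprn_ile1 // ltW.
Qed.

Lemma prod_step (A : R) N j :
  0 <= A ->
  normc (s (N + j)) <= 2 * A ->
  normc (s (N + j) - s N) <= 2 * A * D * (rho ^+ N - rho ^+ (N + j)) ->
  normc (s (N + j.+1) - s N) <= 2 * A * D * (rho ^+ N - rho ^+ (N + j.+1)).
Proof.
move=> A0 hs IH.
rewrite addnS sS.
have -> : s (N + j) * g (N + j) - s N = (s (N + j) - s N) + s (N + j) * (g (N + j) - 1) by ring.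
apply: le_trans (le_normcD _ _) _; rewrite normcM.
have hg := gb (N + j).
have gz := normc_ge0 (g (N + j) - 1).
have sz := normc_ge0 (s (N + j)).
set P := rho ^+ (N + j) in IH hg *.
rewrite exprS -/P.
have e1 : 2 * A * D * (rho ^+ N - rho * P) = 2 * A * D * (rho ^+ N - P) + 2 * A * Cc * P.
  by rewrite -DC; ring.
rewrite e1; apply: lerD => //.
apply: le_trans (_ : 2 * A * normc (g (N + j) - 1) <= _).
  by rewrite ler_wpM2r.
rewrite -[2 * A * Cc * P]mulrA; apply: ler_wpM2l => //; lra.
Qed.


Lemma prod_lim : exists u v : R,
  [/\ (fun N => complex.Re (s N)) @ \oo --> u,
      (fun N => complex.Im (s N)) @ \oo --> v & 0 < u ^+ 2 + v ^+ 2].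
Proof.
have [K HK] : exists K, D * rho ^+ K < 1 / 4.
  have e0 : 0 < 1 / (4 * (D + 1)) by rewrite divr_gt0 // mulr_gt0 // ltr_wpDl.
  have [K HK] := exists_small (introT andP (conj r0 r1)) e0.
  exists K.
  have HK' : (D + 1) * rho ^+ K < 1 / 4.
    have D1 : D + 1 != 0 by rewrite gt_eqF // ltr_wpDl.
    have -> : 1 / 4 = (D + 1) * (1 / (4 * (D + 1))) :> R by field; rewrite D1 /=; lra.
    by rewrite ltr_pM2l // ltr_wpDl.
  apply: le_lt_trans HK'; rewrite ler_wpM2r //; lra.
set A := normc (s K).
have A0 : 0 < A by rewrite lt_def normc_ge0 andbT; apply/negP => /eqP/eq0_normc/eqP; rewrite (negbTE (s0 K)).
have A0' := ltW A0.
have C1 j : normc (s (K + j) - s K) <= 2 * A * D * (rho ^+ K - rho ^+ (K + j)).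
  elim: j => [|j IH]; first by rewrite addn0 !subrr normc0 mulr0.
  apply: prod_step => //.
  have h1 : normc (s (K + j)) <= normc (s (K + j) - s K) + A.
    by rewrite -[X in normc X](subrK (s K)); apply: le_normcD.
  have h2 : 2 * A * D * (rho ^+ K - rho ^+ (K + j)) <= 2 * A * (D * rho ^+ K).
    have := mulr_ge0 (mulr_ge0 (mulr_ge0 (ler0n R 2) A0') D0) (rhoX (K + j)).
    nra.
  nra.
have bnd M : (K <= M)%N -> A / 2 <= normc (s M) /\ normc (s M) <= 2 * A.
  move=> KM; rewrite -(subnKC KM).
  have h0 := C1 (M - K)%N.
  have h2 : 2 * A * D * (rho ^+ K - rho ^+ (K + (M - K)%N)) <= 2 * A * (D * rho ^+ K).
    have := mulr_ge0 (mulr_ge0 (mulr_ge0 (ler0n R 2) A0') D0) (rhoX (K + (M - K)%N)).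
    nra.
  have h1 : normc (s (K + (M - K)%N)) <= normc (s (K + (M - K)%N) - s K) + A.
    by rewrite -[X in normc X](subrK (s K)); apply: le_normcD.
  have h3 : A <= normc (s K - s (K + (M - K)%N)) + normc (s (K + (M - K)%N)).
    by rewrite /A -[X in normc X <= _](subrK (s (K + (M - K)%N))); apply: le_normcD.
  rewrite normcB_sym in h3.
  split; nra.
have C2 N j : (K <= N)%N -> normc (s (N + j) - s N) <= 2 * A * D * (rho ^+ N - rho ^+ (N + j)).
  move=> KN; elim: j => [|j IH]; first by rewrite addn0 !subrr normc0 mulr0.
  apply: prod_step => //.
  by case: (bnd (N + j)); rewrite ?(leq_trans KN) ?leq_addr.
have cv (F : C -> R) : (forall z w, `|F z - F w| <= normc (z - w)) ->
    cvg ((fun N => F (s N)) @ \oo).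
  move=> HF; apply: cauchy_cvg; apply: cauchy_exP => e e0.
  have e1 : 0 < e / (2 * A * (D + 1)) by rewrite divr_gt0 // !mulr_gt0 // ltr_wpDl.
  have [N0 HN0] := exists_small (introT andP (conj r0 r1)) e1.
  pose N1 := maxn K N0.
  exists (F (s N1)); exists N1 => // M /= HM.
  rewrite -(subnKC HM).
  rewrite /ball /=.
  apply: le_lt_trans (HF _ _) _; rewrite normcB_sym.
  apply: le_lt_trans (C2 N1 (M - N1)%N (leq_maxl _ _)) _.
  have hN : rho ^+ N1 <= rho ^+ N0 by rewrite /N1 -(subnKC (leq_maxr K N0)); exact: rhoD.
  have pos : 0 < 2 * A * (D + 1) by rewrite !mulr_gt0 // ltr_wpDl.
  move: HN0; rewrite ltr_pdivlMr // => HN0.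
  have ADp : 0 <= 2 * A * D by rewrite mulr_ge0 // mulr_ge0.
  have h1 := mulr_ge0 ADp (rhoX (N1 + (M - N1))%N).
  have h2 := ler_wpM2l ADp hN.
  have h3 := mulr_ge0 (mulr_ge0 (ler0n R 2) A0') (rhoX N0).
  nra.
have cRe := cv (fun z => complex.Re z) (fun z w => ltac:(rewrite -ReB; exact: normc_Re)).
have cIm := cv (fun z => complex.Im z) (fun z w => ltac:(rewrite -ImB; exact: normc_Im)).
set u := lim _ in cRe; set v := lim _ in cIm.
exists u, v; split => //.
have H2 : (fun N => complex.Re (s N) * complex.Re (s N) + complex.Im (s N) * complex.Im (s N)) @ \oo --> u * u + v * v.
  by apply: cvgD; apply: cvgM.
have hnear : \forall N \near \oo, A ^+ 2 / 4 <= complex.Re (s N) * complex.Re (s N) + complex.Im (s N) * complex.Im (s N).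
  exists K => // N /= KN; rewrite -!expr2 -normc_sqr.
  have [h _] := bnd N KN.
  have hA : 0 <= A / 2 by rewrite divr_ge0.
  have -> : A ^+ 2 / 4 = (A / 2) * (A / 2) by rewrite expr2; field.
  by rewrite expr2; apply: ler_pM.
have := @limr_ge nat \oo _ R (A ^+ 2 / 4) (fun N => complex.Re (s N) * complex.Re (s N) + complex.Im (s N) * complex.Im (s N)) (cvgP _ H2) hnear.
rewrite (cvg_lim _ H2) // => h.
rewrite !expr2; apply: lt_le_trans (h _); by rewrite divr_gt0 // exprn_gt0.
Qed.

End Prod.

Lemma normcX (z : C) k : normc (z ^+ k) = normc z ^+ k.
Proof.
elim: k => [|k IH]; first by rewrite !expr0 normc1.
by rewrite !exprS normcM IH.
Qed.

Lemma theta_neq0 (p x : C) : normc p < 1 -> x != 0 ->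
  (forall k : nat, x * p ^+ k != 1) -> (forall k : nat, p ^+ k.+1 != x) ->
  theta p x != 0.
Proof.
move=> p1 x0 h1 h2.
pose f := fun k : nat => (1 - x * p ^+ k) * (1 - p ^+ k.+1 / x).
pose s := fun N : nat => \prod_(k < N) f k.
have sS N : s N.+1 = s N * f N by rewrite /s big_ord_recr.
have s0 N : s N != 0.
  rewrite /s; apply/prodf_neq0 => i _; rewrite /f mulf_neq0 //.
    by rewrite subr_eq0 eq_sym h1.
  rewrite subr_eq0; apply/negP => /eqP h.
  by move/negP: (h2 i); apply; rewrite -(divfK x0 (p ^+ i.+1)) -h mul1r.
have r0 := normc_ge0 p.
set rho := normc p in p1 r0.
have gb k : normc (f k - 1) <= (normc x + normc x^-1 + 1) * rho ^+ k.
  have -> : f k - 1 = p ^+ k * (- x - p * x^-1 + p ^+ k * p).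
    by rewrite /f exprS; field.
  rewrite normcM normcX mulrC ler_wpM2r ?exprn_ge0 //.
  apply: le_trans (le_normcD _ _) _; apply: lerD; last first.
    rewrite normcM normcX; apply: mulr_ile1 => //; rewrite ?exprn_ge0 ?exprn_ile1 //; exact: ltW.
  apply: le_trans (le_normcD _ _) _; rewrite !normcN; apply: lerD => //.
  rewrite normcM -[X in _ <= X]mul1r ler_wpM2r ?normc_ge0 //; exact: ltW.
have C0 : 0 <= normc x + normc x^-1 + 1 by rewrite !addr_ge0 ?normc_ge0.
have [u [v [cRe cIm uv]]] := @prod_lim s f rho _ r0 p1 C0 sS s0 gb.
rewrite /theta.
have -> : limn (fun N => complex.Re (\prod_(k < N) ((1 - x * p ^+ k) * (1 - p ^+ k.+1 / x)))) = u.
  exact: cvg_lim.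
have -> : limn (fun N => complex.Im (\prod_(k < N) ((1 - x * p ^+ k) * (1 - p ^+ k.+1 / x)))) = v.
  exact: cvg_lim.
have E : u%:C + 'i * v%:C = u +i* v :> C by rewrite [RHS]complexE.
rewrite E; apply/negP => /eqP [] hu hv.
by move: uv; rewrite hu hv expr2 mulr0 addr0 ltxx.
Qed.
End NC.

Lemma theta1 (R : realType) (p : R[i]) : theta p 1 = 0.
Proof.
rewrite /theta.
have H (F : R[i] -> R) : F 0 = 0 ->
  limn (fun N => F (\prod_(k < N) ((1 - 1 * p ^+ k) * (1 - p ^+ k.+1 / 1)))) = 0.
  move=> F0; apply: lim_near_cst => //.
  exists 1%N => // -[|N] //= _.
  by rewrite big_ord_recl /= expr0 mulr1 subrr !mul0r.
by rewrite !H // mulr0 addr0.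
Qed.

Lemma boxes0 k : boxes k 0 = [:: nseq k 0%N].
Proof. by elim: k => //= k ->. Qed.

Lemma size_boxes k N s : s \in boxes k N -> size s = k.
Proof.
elim: k s => [|k IH] s; first by rewrite /= inE => /eqP ->.
move=> /allpairsP [[x y] /= [_ /IH hy ->]] /=; by rewrite hy.
Qed.

Lemma z_in_boxes k N : nseq k 0%N \in boxes k N.
Proof.
elim: k => [|k IH]; first by rewrite /= inE.
by apply/allpairsP; exists (0%N, nseq k 0%N); split => //; rewrite mem_iota.
Qed.

Lemma uniq_boxes k N : uniq (boxes k N).
Proof.
elim: k => [|k IH] //.
apply: allpairs_uniq => //; first exact: iota_uniq.
by move=> [x s] [x' s'] _ _ /= [-> ->].
Qed.

Lemma sorted_z k : sorted geq (nseq k 0%N).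
Proof. by elim: k => // -[|k] //= IH. Qed.

Section Main.
Variable R : realType.
Local Notation C := R[i].
Variables (p q t a b r : C) (n : nat).
Hypothesis hp : normc p < 1.
Hypothesis hg : generic_params p q t a b r.

Local Notation z := (nseq n 0%N).

Definition mono (y : C) := exists e5 e2 : int, y = b * r ^ e5 * t ^ e2.

Let nz : [/\ q != 0, t != 0, a != 0, b != 0 & r != 0].
Proof. by case: hg. Qed.
Let t0 : t != 0. Proof. by case: nz. Qed.
Let b0 : b != 0. Proof. by case: nz. Qed.
Let r0 : r != 0. Proof. by case: nz. Qed.

Lemma mono_notp y (e : int) : mono y -> y != p ^ e.
Proof.
case=> e5 [e2 ->]; apply/negP => /eqP h.
case: hg => _ /(_ 0 e2 0 1 e5 e).
have -> : q ^ 0 * t ^ e2 * a ^ 0 * b ^ 1 * r ^ e5 = b * r ^ e5 * t ^ e2.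
  by rewrite !expr0z expr1z !mul1r; ring.
by case/(_ h).
Qed.

Lemma mono_theta y : mono y -> theta p y != 0.
Proof.
move=> my; apply: theta_neq0 => //.
- by case: my => e5 [e2 ->]; rewrite !mulf_neq0 // expfz_neq0.
- move=> k; apply/negP => /eqP h.
  have pk : p ^+ k != 0 by apply/negP => /eqP pk; move: h; rewrite pk mulr0 => /eqP; rewrite eq_sym oner_eq0.
  have : y = p ^ (- (k%:Z)).
    by rewrite -invr_expz -[y](mulfK pk) h mul1r.
  by move/eqP; rewrite (negbTE (mono_notp _ _ my)).
- move=> k; apply/negP => /eqP h.
  have : y = p ^ (k.+1%:Z) by rewrite -h.
  by move/eqP; rewrite (negbTE (mono_notp _ _ my)).
Qed.

Lemma mono_b k : mono (b * r ^+ k).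
Proof. by exists k%:Z, 0; rewrite expr0z mulr1. Qed.

Lemma mono_divr y : mono y -> mono (y / r).
Proof.
case=> e5 [e2 ->]; exists (e5 - 1), e2.
by rewrite expfzDr // exprN1; ring.
Qed.

Lemma mono_mult y (e : int) : mono y -> mono (y * t ^ e).
Proof.
case=> e5 [e2 ->]; exists e5, (e2 + e).
by rewrite expfzDr //; ring.
Qed.

Lemma mono_multn y (k : nat) : mono y -> mono (y * t ^+ k).
Proof. exact: (mono_mult y k%:Z). Qed.

Lemma partz i : part z i = 0%N.
Proof. by rewrite /part nth_nseq; case: ifP. Qed.

Lemma poch0 c : poch p q c 0 = 1.
Proof. rewrite /poch /pochn; exact: big_ord0. Qed.

Lemma pochR_z y : pochR p q t n y z z = 1.
Proof. by rewrite /pochR; apply: big1 => i _; rewrite partz subrr poch0. Qed.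

Lemma pochP_z y : pochP p q t n y z = 1.
Proof. by rewrite /pochP; apply: big1 => i _; rewrite partz poch0. Qed.

Lemma interlace_zz : interlace n z z.
Proof. by apply/allP => i _; rewrite !partz. Qed.

Lemma Hfun_z B : Hfun p q t n B z z = 1.
Proof.
rewrite /Hfun; cbv zeta.
rewrite big1 ?mul1r; last first.
  move=> i _; apply: big1 => j _; rewrite !partz !subrr !poch0.
  by rewrite !(mulr1, invr1).
apply: big1 => i _; apply: big1 => j _; rewrite !partz !subrr !poch0.
by rewrite !(mulr1, invr1).
Qed.


Lemma W1_z y A B : mono B -> W1 p q t n y A B z z = 1.
Proof.
move=> mB; rewrite /W1 interlace_zz Hfun_z !pochR_z !pochP_z.
rewrite big1 ?(mulr1, invr1) //.
move=> i _; rewrite !partz muln0 expr0 mulr1 addn0 !poch0 subrr mulr0 expr0z.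
rewrite divff ?(mulr1, invr1) //.
exact/mono_theta/mono_mult.
Qed.

Lemma Wm_z xs A B : mono B -> Wm p q t n xs A B z z = 1.
Proof.
elim: xs A B => [|y zs IH] A B mB; first by rewrite /= eqxx.
case: zs IH => [|y' zs'] IH; first exact: W1_z.
have -> : Wm p q t n [:: y, y' & zs'] A B z z =
  \sum_(nu <- boxes n (part z 1) | interlace n z nu)
    W1 p q t n (y * t ^- (size (y' :: zs'))) (A * t ^+ (2 * size (y' :: zs')))
       (B * t ^+ size (y' :: zs')) z nu * Wm p q t n (y' :: zs') A B nu z by [].
rewrite partz boxes0 big_cons big_nil interlace_zz addr0 W1_z ?IH ?mulr1 //.
exact: mono_multn.
Qed.

Lemma omega1_z A B : mono B -> omega1 p q t n 1 r A B z z = 1.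
Proof.
move=> mB; rewrite /omega1 !pochR_z !pochP_z Wm_z; last first.
  exact/mono_mult/mono_divr.
rewrite [X in _ * X * _]big1; last first.
  move=> i _; apply: big1 => j _; rewrite !partz !subrr addn0 !poch0.
  by rewrite !(mulr1, invr1).
rewrite big1 ?(mulr1, invr1) //.
move=> i _; rewrite partz muln0 !expr0 !mulr1 divff //.
exact/mono_theta/mono_mult/mono_divr.
Qed.

Lemma omega1_nz A B lam : size lam = n -> sorted geq lam ->
  ~~ all (fun k => k == 0%N) lam -> omega1 p q t n 1 r A B lam z = 0.
Proof.
case: lam => [|h tl] //= hs hsort hnz.
have hpos : (0 < h)%N.
  case: h hsort hnz => // hsort; rewrite eqxx /= => /negP; case.
  have tr : transitive geq by move=> x y w h1 h2; exact: leq_trans h2 h1.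
  have := order_path_min tr hsort.
  by move=> /allP H; apply/allP => k /H; case: k.
have H0 : pochR p q t n 1^-1 (h :: tl) z = 0.
  rewrite /pochR big_ltn; last by rewrite -hs.
  rewrite partz subr0.
  have -> : part (h :: tl) 1 = h by [].
  case: h hpos hsort hnz => // h' _ _ _.
  rewrite invr1 mul1r subrr expr0z expr0 !mulr1.
  rewrite /poch /pochn big_ord_recl /= expr0 mulr1 theta1.
  by rewrite !mul0r.
by rewrite /omega1 H0 !mul0r.
Qed.

Lemma subpart_z l : subpart n z l.
Proof. by apply/allP => i _; rewrite partz. Qed.

Definition xs k := [seq r ^+ (k.-1 - j) | j <- iota 0 k].

Arguments xs : simpl never.

Lemma xsS k : xs k.+1 = r ^+ k :: xs k.
Proof.
rewrite /xs /= subn0; congr (_ :: _).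
have -> : iota 1 k = [seq 1 + i | i <- iota 0 k]%N by rewrite -iotaDl.
rewrite -map_comp; apply: eq_map => j /=.
by rewrite add1n subnS predn_sub.
Qed.

Lemma omega1_one A B lam : mono B -> size lam = n -> sorted geq lam ->
  omega1 p q t n 1 r A B lam z = if all (fun k => k == 0%N) lam then 1 else 0.
Proof.
move=> mB hs hsort; case: ifP => hall.
  have := hall => /all_pred1P ->; rewrite hs; exact: omega1_z.
by apply: omega1_nz => //; rewrite hall.
Qed.

Lemma main_ind k lam : size lam = n -> sorted geq lam ->
  omega p q t n (xs k.+1) r a b lam z = if all (fun k => k == 0%N) lam then 1 else 0.
Proof.
elim: k lam => [|k IH] lam hs hsort.
  rewrite xsS /= expr0.
  apply: omega1_one => //; exists 0, 0; by rewrite !expr0z !mulr1.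
rewrite xsS xsS.
have -> : omega p q t n [:: r ^+ k.+1, r ^+ k & xs k] r a b lam z =
  \sum_(mu <- boxes n (part lam 1) | [&& sorted geq mu, subpart n z mu & subpart n mu lam])
    omega1 p q t n (r ^+ k.+1 / r ^+ (size (r ^+ k :: xs k))) r
      (a * r ^+ (2 * size (r ^+ k :: xs k))) (b * r ^+ size (r ^+ k :: xs k)) lam mu
    * omega p q t n (r ^+ k :: xs k) r a b mu z by [].
rewrite -xsS.
have sz : size (xs k.+1) = k.+1 by rewrite size_map size_iota.
rewrite sz divff ?expf_neq0 //.
rewrite big_mkcond (bigD1_seq z) ?z_in_boxes ?uniq_boxes //.
rewrite sorted_z !subpart_z -[[&& true, true & true]]/true IH ?size_nseq ?sorted_z // all_nseq eqxx orbT mulr1.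
rewrite big1_seq; first by rewrite /= addr0 omega1_one //; exact: mono_b.
move=> mu /andP[hne hin].
have hsz := @size_boxes _ _ _ hin.
case: ifP => [/and3P[hsm _ _]|_] //.
rewrite IH //; case: ifP => [hall|_]; last by rewrite mulr0.
move: hne; have := hall => /all_pred1P ->.
by rewrite hsz eqxx.
Qed.

End Main.

Lemma normc_norm (R : realType) (z : R[i]) : `|z| = (normc z)%:C.
Proof. by case: z => a b; rewrite normc_def. Qed.

Theorem mainTheorem19 (R : realType) (p q t a b r : R[i]) (n m : nat)
    (lam : seq nat) :
  `|p| < 1 ->
  generic_params p q t a b r ->
  size lam = n -> sorted geq lam ->
  (1 <= m)%N ->
  omega p q t n [seq r ^+ (m.-1 - j) | j <- iota 0 m] r a b lam (nseq n 0%N)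
  = (if all (fun k => k == 0%N) lam then 1 else 0).
Proof.
move=> hp0 hg hs hsort hm.
have hp : normc p < 1 by move: hp0; rewrite normc_norm ltcE /= => /andP[].
case: m hm => // m _.
exact: (@main_ind R p q t a b r n hp hg m lam hs hsort).
Qed.
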